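(* For any positive integers $r$ and $n$ with $\omega(n)\geq 2$ and $n\in F_r$, $\displaystyle P_1(n)<Q_1(n)\left(1-J_r+\frac{J_r}{r}Q_1(n)\right)$.
   Context: For a positive integer $r$, $S_r$ is the multiplicative arithmetic function with $S_r(p^{\alpha})=0$ if $p\leq r$ and $S_r(p^{\alpha})=p^{\alpha-1}(p-r)$ if $p>r$, for all primes $p$ and positive integers $\alpha$. $B_r=\{n\in\mathbb{N}: S_r(n)>0\}$ (positive integers whose smallest prime factor exceeds $r$, together with $1$). $F_r$ is the set of $n\in B_r$ such that $S_r(n)<S_r(m)$ for all $m\in B_r$ with $m>n$. $\omega(n)$ is the number of distinct prime factors of $n$. $P_1(n)$ is the largest prime divisor of $n$, and $Q_1(n)$ is the smallest prime that is larger than $r$ and does not divide $n$. $r\#$ is the product of all primes $\leq r$ (with $1\#=1$). The Jacobsthal function $J(m)$ is the smallest positive integer $a$ such that every set of $a$ consecutive integers contains an element coprime to $m$; $J_r=J(r\#)$. *)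

(* Defs.v *)
From mathcomp Require Import all_boot all_order all_algebra.
Set Implicit Arguments. Unset Strict Implicit. Unset Printing Implicit Defensive.
Import Order.TTheory GRing.Theory Num.Theory.

Definition S (r n : nat) : nat :=
  \prod_(p <- primes n) (if r < p then p ^ (logn p n).-1 * (p - r) else 0).

Definition inB (r n : nat) : bool := (0 < n) && (0 < S r n).

Definition inF (r n : nat) : Prop :=
  inB r n /\ (forall m : nat, inB r m -> n < m -> S r n < S r m).

Definition omega (n : nat) : nat := size (primes n).

Definition P1 (n : nat) : nat := max_pdiv n.

(* Q_1(n): smallest prime > r not dividing n (for n > 0; the n == 0 disjunct
   only serves to make the definition total). *)
Definition Q1_pred (r n : nat) : pred nat :=
  fun p => [&& prime p, r < p & (n == 0) || ~~ (p %| n)].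

Lemma Q1_exists (r n : nat) : exists p, Q1_pred r n p.
Proof.
case: (prime_above (r + n)) => p Hp pp; exists p.
rewrite /Q1_pred pp /=.
apply/andP; split; first by apply: leq_ltn_trans Hp; apply: leq_addr.
case: n Hp => [|n] Hp //=; apply/negP => /(dvdn_leq (ltn0Sn n)) H.
by move: (leq_trans Hp H); rewrite ltnNge leq_addl.
Qed.

Definition Q1 (r n : nat) : nat := ex_minn (Q1_exists r n).

Definition primorial (r : nat) : nat := \prod_(p < r.+1 | prime p) p.

Definition jac_ok (m a : nat) : Prop :=
  forall k : int, exists i : nat, (i < a)%N /\ coprimez (k + i%:Z)%R m%:Z.

Definition is_jacobsthal (m a : nat) : Prop :=
  (0 < a)%N /\ jac_ok m a /\ (forall b : nat, (0 < b)%N -> jac_ok m b -> (a <= b)%N).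

(* Main.v *)
Require Import Defs.
From mathcomp Require Import all_boot all_order all_algebra.
From mathcomp Require Import ring lra zify.
Import Order.TTheory GRing.Theory Num.Theory.

Definition fr (r l : nat) : rat := (1 - r%:R / l%:R)%R.

Lemma fr_ge0 r l : (r < l)%N -> (0 <= fr r l <= 1)%R.
Proof.
move=> H; rewrite /fr.
have l0 : ((0:rat) < l%:R)%R by rewrite ltr0n; lia.
apply/andP; split.
- by rewrite subr_ge0 ler_pdivrMr // mul1r ler_nat; lia.
- by rewrite lerBlDr lerDl; apply: divr_ge0; apply: ler0n.
Qed.

Lemma S_rat r m : (0 < m)%N -> {in primes m, forall l, r < l}%N ->
  ((S r m)%:R = m%:R * \prod_(l <- primes m) fr r l :> rat)%R.
Proof.
move=> m0 Hl.
have Hm := prod_prime_decomp m0; rewrite prime_decompE big_map /= in Hm.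
rewrite {2}Hm /S !natr_prod -big_split /=.
rewrite big_seq [RHS]big_seq; apply: eq_bigr => l lm.
have rl := Hl l lm; rewrite rl /fr.
have e0 : (0 < logn l m)%N by rewrite logn_gt0.
have l0 : (l%:R != 0 :> rat)%R by rewrite pnatr_eq0; lia.
rewrite natrM !natrX natrB; last by lia.
rewrite -{2}(prednK e0) exprS; field; exact l0.
Qed.

Lemma primes_gt r m : (0 < S r m)%N -> {in primes m, forall l, r < l}%N.
Proof.
move=> H l lm; move: H; rewrite /S (big_rem l lm) /=.
by case: ifP => // _; rewrite mul0n.
Qed.

Lemma dvd_primorial r l : prime l -> (l <= r)%N -> (l %| primorial r)%N.
Proof.
move=> lp lr; have lr' : (l < r.+1)%N by rewrite ltnS.
by rewrite /primorial (bigD1 (Ordinal lr')) //= dvdn_mulr.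
Qed.

Lemma key (P Q R K D J : rat) : (0 < R)%R -> (R < Q)%R -> (K <= D + J)%R ->
  (D * Q <= P)%R -> (0 <= J)%R -> (Q * (1 - J + J / R * Q) <= P)%R ->
  (K * (Q - R) <= P - R)%R.
Proof.
move=> R0 RQ KD DQ J0 H.
set u := (J / R)%R.
have Ju : J = (u * R)%R by rewrite /u mulfVK //; lra.
have u0 : (0 <= u)%R by rewrite /u divr_ge0 //; lra.
have Rn : R != 0%R by rewrite gt_eqF.
rewrite Ju in KD H; rewrite mulfK // in H.
have Q0 : (0 < Q)%R by lra.
rewrite -(ler_pM2l Q0).
have h1 : (0 <= (Q - R) * (D + u * R - K))%R by apply: mulr_ge0; lra.
have h2 : (0 <= (Q - R) * (P - D * Q))%R.
  apply: mulr_ge0; first lra. by rewrite subr_ge0.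
have h3 : (0 <= R * (P - Q * (1 - u * R + u * Q)))%R.
  apply: mulr_ge0; first lra. by rewrite subr_ge0.
nra.
Qed.

Arguments fr_ge0 {r l}.
Arguments S_rat {r m}.
Arguments primes_gt {r m}.
Arguments dvd_primorial {r l}.

Theorem lemma3p4 (r n J : nat) :
  (0 < r)%N -> (0 < n)%N -> (2 <= omega n)%N -> inF r n ->
  is_jacobsthal (primorial r) J ->
  ((P1 n)%:Q < (Q1 r n)%:Q * (1 - J%:Q + J%:Q / r%:Q * (Q1 r n)%:Q))%R.
Proof.
move=> r0 n0 om [Bn Fn] [J0 [Jok _]].
have n1 : (1 < n)%N.
  case: (ltnP 1 n) => // H.
  have E : n = 1%N by lia.
  by move: om; rewrite E.
rewrite -!pmulrn ltNge; apply/negP.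
set p := P1 n. set q := Q1 r n.
have pp : prime p := max_pdiv_prime n1.
have pn : (p %| n)%N := max_pdiv_dvd n.
have : Q1_pred r n q by rewrite /q /Q1; case: ex_minnP.
move=> /and3P [qp rq]; rewrite (_ : (n == 0) = false) /=; last by lia.
move=> qn.
have Hn := primes_gt (andP Bn).2.
have q0 : (0 < q)%N by lia.
set d := (p %/ q)%N.
have [i [iJ cop]] := Jok (Posz d.+1).
set k := (d.+1 + i)%N.
have ck : coprime k (primorial r) by move: cop; rewrite -PoszD coprimezE.
set n' := (n %/ p)%N.
have En : n = (n' * p)%N by rewrite /n' divnK.
have n'0 : (0 < n')%N by rewrite /n' divn_gt0 ?prime_gt0 // dvdn_leq.
set m := (n' * q * k)%N.
have pqk : (p < q * k)%N.
  apply: (leq_trans (ltn_ceil p q0)); rewrite mulnC leq_mul2l; apply/orP; right.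
  rewrite /k /d; lia.
have nm : (n < m)%N by rewrite En /m -mulnA ltn_pmul2l.
have m0 : (0 < m)%N by lia.
have Hm : {in primes m, forall l, r < l}%N.
  move=> l; rewrite mem_primes => /and3P [lp _].
  rewrite /m !Euclid_dvdM // -orbA => /or3P [ln|lq|lk].
  - apply: Hn; rewrite mem_primes lp n0 /= En; exact: dvdn_mulr.
  - by move: lq; rewrite dvdn_prime2 // => /eqP ->.
  - case: (ltnP r l) => // lr.
    have := dvd_primorial lp lr.
    move=> H2.
    have : (l %| gcdn k (primorial r))%N by rewrite dvdn_gcd lk H2.
    by rewrite (eqP ck) dvdn1 => /eqP l1; move: lp; rewrite l1.
have Bm : inB r m.
  rewrite /inB m0 /= /S big_seq_cond; apply: prodn_cond_gt0 => l /andP [lm _].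
  have h := Hm l lm; rewrite h muln_gt0 expn_gt0 subn_gt0 h andbT.
  apply/orP; left; lia.
have Slt := Fn m Bm nm.
move=> H.
set G' := (\prod_(l <- primes n | l != p) fr r l)%R.
have pn' : p \in primes n by rewrite mem_primes pp n0.
have SnQ : ((S r n)%:R = n%:R * (fr r p * G') :> rat)%R.
  by rewrite (S_rat n0 Hn) (bigD1_seq p pn' (primes_uniq n)).
have G'0 : (0 <= G')%R.
  rewrite /G' big_seq_cond; apply: prodr_ge0 => l /andP [ln _].
  by have /andP[] := fr_ge0 (Hn l ln).
set a := fun l : nat => (l == q) || ((l != p) && (l \in primes n)).
have Gm : (\prod_(l <- primes m) fr r l <= fr r q * G')%R.
  rewrite (bigID a) /=.
  have X0 : (0 <= \prod_(i0 <- primes m | a i0) fr r i0)%R.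
    rewrite big_seq_cond; apply: prodr_ge0 => l /andP [lm _].
    by have /andP[] := fr_ge0 (Hm l lm).
  have Y1 : (\prod_(i0 <- primes m | ~~ a i0) fr r i0 <= 1)%R.
    rewrite big_seq_cond; apply: prodr_ile1 => l /andP [lm _].
    exact: fr_ge0 (Hm l lm).
  apply: (le_trans (ler_piMr X0 Y1)).
  rewrite -big_filter.
  have qnn : q \notin primes n by rewrite mem_primes qp n0.
  have pe : perm_eq [seq l <- primes m | a l] (q :: [seq l <- primes n | l != p]).
    apply: uniq_perm.
    - exact: filter_uniq (primes_uniq m).
    - by rewrite /= mem_filter (negbTE qnn) andbF filter_uniq ?primes_uniq.
    move=> l; rewrite mem_filter inE mem_filter /a.
    apply: andb_idr => /orP [/eqP ->|/andP [lp ln]].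
    + by rewrite mem_primes qp m0 /m dvdn_mulr // dvdn_mull.
    + move: ln; rewrite !mem_primes => /and3P [lpr _ ln].
      rewrite lpr m0 /= /m -mulnA dvdn_mulr //.
      move: ln; rewrite En (Euclid_dvdM _ _ lpr) (dvdn_prime2 lpr pp) => /orP [//|/eqP lpe]. by rewrite lpe eqxx in lp.
  by rewrite (perm_big _ pe) big_cons big_filter.
have SmQ : ((S r m)%:R <= m%:R * (fr r q * G') :> rat)%R.
  rewrite (S_rat m0 Hm); apply: ler_wpM2l => //; exact: ler0n.
have Hk : ((k%:R : rat) * (q%:R - r%:R) <= p%:R - r%:R)%R.
  apply: (@key _ _ _ _ (d%:R) (J%:R)).
  - by rewrite ltr0n.
  - by rewrite ltr_nat.
  - by rewrite -natrD ler_nat /k; lia.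
  - by rewrite -natrM ler_nat leq_divM.
  - exact: ler0n.
  - exact: H.
have q0' : (q%:R != 0 :> rat)%R by rewrite pnatr_eq0; lia.
have p0' : (p%:R != 0 :> rat)%R by rewrite pnatr_eq0 -lt0n prime_gt0.
have E1 : (m%:R * (fr r q * G') = n'%:R * (k%:R * (q%:R - r%:R)) * G' :> rat)%R.
  by rewrite /m !natrM /fr; field.
have E2 : ((S r n)%:R = n'%:R * (p%:R - r%:R) * G' :> rat)%R.
  by rewrite SnQ {1}En natrM /fr; field.
have : ((S r m)%:R <= (S r n)%:R :> rat)%R.
  apply: (le_trans SmQ); rewrite E1 E2; apply: ler_wpM2r => //.
  apply: ler_wpM2l => //; exact: ler0n.
by rewrite ler_nat leqNgt Slt.
Qed.
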